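(* Let $A\in\mathbb{R}^{n\times n}$, $C\in\mathbb{R}^{m\times n}$, and consider the system $x^+=Ax$, $y=Cx$ on $\mathcal{X}=\mathbb{R}^n$, $\mathcal{Y}=\mathbb{R}^m$. Let $S_0:=\mathcal{N}(C)$ and $S_k:=AS_{k-1}\cap S_0$ for $k\ge1$. Then for every $k\in\{0,1,2,\ldots\}$ and every $x\in\mathbb{R}^n$, $$[x]_k=\begin{cases} x+S_k & \text{if } x\in\mathcal{R}(A^k),\\ \emptyset & \text{if } x\notin\mathcal{R}(A^k),\end{cases}$$ where $\mathcal{R}(A^k)$ is the range of $A^k$.
   Context: For a system $x^+=f(x)$, $y=h(x)$ with $f:\mathcal{X}\to\mathcal{X}$, $h:\mathcal{X}\to\mathcal{Y}$, inverse images are taken in the set-valued sense: $f^{-1}(x):=\{\eta\in\mathcal{X}: f(\eta)=x\}$ (possibly empty), $h^{-1}(y):=\{\eta: h(\eta)=y\}$, and images of sets are $f(S)=\{f(s):s\in S\}$; for a set $S$ of points, $[S]_k:=\bigcup_{s\in S}[s]_k$. Define $[x]_0:=h^{-1}(h(x))$, and for $k\ge0$: $[x]_k^+:=f([f^{-1}(x)]_k)$ and $[x]_{k+1}:=[x]_k^+\cap[x]_0$. Here $f(x)=Ax$, $h(x)=Cx$. *)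

(* Defs.v *)
From HB Require Import structures.
From mathcomp Require Import all_boot all_order all_algebra.
Set Implicit Arguments. Unset Strict Implicit. Unset Printing Implicit Defensive.
Import Order.TTheory GRing.Theory Num.Theory.
Local Open Scope ring_scope.

Section Classes.
Variables (X Y : Type) (f : X -> X) (h : X -> Y).

(* [x]_0 = h^{-1}(h x);
   [x]_{k+1} = f([f^{-1}(x)]_k) ∩ [x]_0, where
   f([f^{-1}(x)]_k) = { f xi | exists s, f s = x /\ xi \in [s]_k }. *)
Fixpoint obs_class (k : nat) (x : X) : X -> Prop :=
  match k with
  | 0 => fun eta => h eta = h x
  | k'.+1 => fun eta =>
      (exists s xi, f s = x /\ obs_class k' s xi /\ eta = f xi) /\ h eta = h x
  end.
End Classes.

Fixpoint Sseq (R : fieldType) (m n : nat) (A : 'M[R]_n) (C : 'M[R]_(m, n))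
    (k : nat) : 'cV[R]_n -> Prop :=
  match k with
  | 0 => fun v => C *m v = 0
  | k'.+1 => fun v => (exists s, Sseq A C k' s /\ v = A *m s) /\ C *m v = 0
  end.

Definition in_range (R : fieldType) (n : nat) (M : 'M[R]_n) (x : 'cV[R]_n) : Prop :=
  exists z : 'cV[R]_n, x = M *m z.

(* Main.v *)
Require Import Defs.
From HB Require Import structures.
From mathcomp Require Import all_boot all_order all_algebra.
Import Order.TTheory GRing.Theory Num.Theory.
Local Open Scope ring_scope.

Lemma key (R : realFieldType) (m n : nat)
    (A : 'M[R]_n) (C : 'M[R]_(m, n)) (k : nat) :
  forall (x eta : 'cV[R]_n),
    obs_class (fun v => A *m v) (fun v => C *m v) k x eta <->
    (in_range (A ^+ k) x /\ exists s, Sseq A C k s /\ eta = x + s).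
Proof.
elim: k => [|k IH] x eta /=.
  split.
    move=> H; split; first by exists x; rewrite expr0 mul1mx.
    exists (eta - x); split; last by rewrite addrC subrK.
    by rewrite mulmxBr H subrr.
  by move=> [_ [s [Hs ->]]]; rewrite mulmxDr Hs addr0.
split.
  move=> [[s [xi [Hs [Hxi ->]]]] HC]; subst x.
  have [[z Hz] [t [Ht Hx]]] := (IH s xi).1 Hxi; subst s xi.
  split; first by exists z; rewrite exprS mulmxA -mulmxE.
  exists (A *m t); split; last by rewrite mulmxDr.
  split; first by exists t.
  move: HC; rewrite !mulmxDr => /eqP; rewrite -subr_eq0 addrC addKr.
  by move/eqP.
move=> [[z ->] [v [[[t [Ht ->]] HCv] ->]]].
split; last by rewrite mulmxDr HCv addr0.
exists (A ^+ k *m z), (A ^+ k *m z + t).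
split; first by rewrite exprS mulmxA -mulmxE.
split; first by apply/IH; split; [exists z | exists t].
by rewrite mulmxDr exprS mulmxA -mulmxE.
Qed.

Theorem mainTheorem2 (R : realFieldType) (m n : nat)
    (A : 'M[R]_n) (C : 'M[R]_(m, n)) :
  forall (k : nat) (x : 'cV[R]_n),
    (in_range (A ^+ k) x ->
       forall eta : 'cV[R]_n,
         obs_class (fun v => A *m v) (fun v => C *m v) k x eta <->
         (exists s, Sseq A C k s /\ eta = x + s)) /\
    (~ in_range (A ^+ k) x ->
       forall eta : 'cV[R]_n,
         ~ obs_class (fun v => A *m v) (fun v => C *m v) k x eta).
Proof.
move=> k x; split.
  move=> Hr eta; split; [by move/key => [] | by move=> H; apply/key].
by move=> Hn eta /key [].
Qed.
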